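(* Let $G$ be a finite simple connected graph and let $k,l$ be integers with $2\le k\le l\le |V(G)|$. Then $\kappa_k^*(G)\geq \kappa_l^*(G)$.
   Context: For $S\subseteq V(G)$ with $|S|\ge 2$, an $S$-Steiner tree of $G$ is a subtree $T$ of $G$ with $S\subseteq V(T)$ all of whose leaves belong to $S$. A family of $S$-Steiner trees $T_1,\dots,T_k$ is completely independent if for all $1\le p<q\le k$: $E(T_p)\cap E(T_q)=\emptyset$, $V(T_p)\cap V(T_q)=S$, and for any two vertices $x_1,x_2\in S$ the $(x_1,x_2)$-paths in $T_p$ and in $T_q$ are internally disjoint. $\kappa^*_G(S)$ is the maximum number of trees in a completely independent family of $S$-Steiner trees in $G$, and the generalized $k^*$-connectivity is $\kappa_k^*(G)=\min\{\kappa^*_G(S): S\subseteq V(G),\ |S|=k\}$. *)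

(* Defs.v *)
From mathcomp Require Import all_boot all_order.
From mathcomp Require Import boolp.

Set Implicit Arguments.
Unset Strict Implicit.
Unset Printing Implicit Defensive.

Section Steiner.
Variable T : finType.
Variable G : rel T.

(* A subgraph H = (vertex set, edge set); edges are 2-element sets {x,y}. *)
Definition subgraph := ({set T} * {set {set T}})%type.

Definition sg_adj (H : subgraph) : rel T := fun x y => [set x; y] \in H.2.

Definition is_subgraph (H : subgraph) : Prop :=
  forall E, E \in H.2 -> exists x y, [/\ E = [set x; y], x \in H.1, y \in H.1 & G x y].

(* a path in H from x to y: the vertex sequence x :: p, no repeated vertices *)
Definition is_path (H : subgraph) (x y : T) (p : seq T) : Prop :=
  [/\ x \in H.1, path (sg_adj H) x p, last x p = y & uniq (x :: p)].

Definition internal (x y : T) (p : seq T) : {set T} :=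
  [set v | (v \in x :: p) && (v != x) && (v != y)].

Definition sg_connected (H : subgraph) : Prop :=
  forall x y, x \in H.1 -> y \in H.1 -> exists p, is_path H x y p.

Definition acyclic (H : subgraph) : Prop :=
  forall c : seq T, 3 <= size c -> uniq c -> ~ cycle (sg_adj H) c.

Definition is_tree (H : subgraph) : Prop :=
  [/\ is_subgraph H, H.1 != set0, sg_connected H & acyclic H].

Definition sg_deg (H : subgraph) (x : T) : nat := #|[set y | sg_adj H x y]|.

Definition is_leaf (H : subgraph) (x : T) : Prop := x \in H.1 /\ sg_deg H x = 1.

Definition steiner_tree (S : {set T}) (H : subgraph) : Prop :=
  [/\ is_tree H, S \subset H.1 & forall x, is_leaf H x -> x \in S].

Definition compl_indep (S : {set T}) (m : nat) (F : 'I_m -> subgraph) : Prop :=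
  (forall i, steiner_tree S (F i)) /\
  forall i j : 'I_m, i < j ->
    [/\ (F i).2 :&: (F j).2 = set0,
        (F i).1 :&: (F j).1 = S &
        forall x1 x2 p q, x1 \in S -> x2 \in S ->
          is_path (F i) x1 x2 p -> is_path (F j) x1 x2 q ->
          [disjoint internal x1 x2 p & internal x1 x2 q]].

(* Such trees are pairwise edge-disjoint and each has
   at least one edge of G, so m <= #|T| * #|T|; the range bound is harmless. *)
Definition kappaS (S : {set T}) : nat :=
  \max_(m < (#|T| * #|T|).+1 | `[< exists F : 'I_m -> subgraph, compl_indep S F >]) m.

Definition kappa_star (k : nat) : nat :=
  \big[minn/(#|T| * #|T|)]_(S : {set T} | #|S| == k) kappaS S.

End Steiner.

(* Main.v *)
Require Import Defs.
From mathcomp Require Import all_boot all_order.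
From mathcomp Require Import boolp.
Set Implicit Arguments.
Unset Strict Implicit.
Unset Printing Implicit Defensive.

Section Gen.
Variables (T : finType) (e : rel T) (esym : symmetric e).
Hypothesis acyc : forall c : seq T, 3 <= size c -> uniq c -> ~ cycle e c.

Lemma rev_path_sym x p : path e x p -> path e (last x p) (rev (belast x p)).
Proof.
move=> h; rewrite rev_path; apply: sub_path h => a b; by rewrite esym.
Qed.

Lemma two_paths_False x y p z q : y != z -> path e x (y::p) -> path e x (z::q) ->
  uniq (x::y::p) -> uniq (x::z::q) -> last y p = last z q -> False.
Proof.
move=> yz pP pQ uP uQ lst.
have hasPQ : has (mem (z::q)) (y::p).
  apply/hasP; exists (last y p); first exact: mem_last.
  by rewrite lst; exact: mem_last.
have [P Pdef] : {P | P = y :: p} by exists (y::p).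
have [Q Qdef] : {Q | Q = z :: q} by exists (z::q).
rewrite -Pdef -Qdef in hasPQ pP uP pQ uQ.
move: Pdef pP uP; case: (split_find hasPQ) => w P1 P2 wQ nP1 Pdef pP uP.
move: Qdef pQ uQ hasPQ nP1; case/splitPr: wQ => Q1 Q2 Qdef pQ uQ _ nP1.
move: uP; rewrite /= mem_cat negb_or => /andP[/andP[xP1 xP2] uP].
move: uQ; rewrite /= mem_cat negb_or => /andP[/andP[xQ1 xQ2] uQ].
move: uQ; rewrite cat_uniq => /and3P[uQ1 hQ uQ2].
have wQ1 : w \notin Q1.
  apply/negP => wQ1; move/hasP: hQ; apply; exists w => //; exact: mem_head.
move: uP; rewrite cat_uniq => /and3P[uP1 _ _].
apply: (acyc (c := x :: rcons P1 w ++ rev Q1)).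
- rewrite /= size_cat size_rcons size_rev.
  case: P1 Pdef nP1 {xP1 uP1 pP} => [|a P1] /=.
    case: Q1 Qdef {xQ1 uQ1 hQ wQ1 pQ} => [|b Q1] //=.
    move=> [wz _] [wy _] _; by rewrite -wz -wy eqxx in yz.
  by move=> *; rewrite !addSn.
- rewrite /= cat_uniq rev_uniq uP1 uQ1 mem_cat mem_rev negb_or xP1 xQ1 /= andbT.
  apply/hasPn => v; rewrite mem_rev => vQ1; rewrite mem_rcons inE.
  apply/negP => /orP[/eqP vw|vP1]; first by rewrite -vw vQ1 in wQ1.
  move/hasP: nP1; apply; exists v => //=; rewrite mem_cat vQ1 //.
- rewrite /= rcons_cat cat_path; apply/andP; split.
    by move: pP; rewrite cat_path => /andP[].
  rewrite last_rcons -rev_cons.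
  move: pQ; rewrite -cat_rcons cat_path => /andP[/rev_path_sym + _].
  by rewrite last_rcons belast_rcons.
Qed.

Lemma path_unique x p q : path e x p -> path e x q -> uniq (x::p) -> uniq (x::q) ->
  last x p = last x q -> p = q.
Proof.
elim: p x q => [|y p IH] x [|z q] //=.
- move=> _ _ _ /andP[xq _] lst; exfalso; move: xq; rewrite lst mem_last //.
- move=> _ _ /andP[xp _] _ lst; exfalso; move: xp; rewrite -lst mem_last //.
- move=> pp qq ux uz lst.
  case: (eqVneq y z) => [yz|yz].
    subst z; congr cons; apply: (IH y) => //.
    + by case/andP: pp.
    + by case/andP: qq.
    + by case/andP: ux.
    + by case/andP: uz.
  exfalso; exact: (@two_paths_False x y p z q yz).
Qed.
End Gen.

Section Graph.
Variables (T : finType) (G : rel T).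

Lemma sg_adj_sym (H : subgraph T) : symmetric (sg_adj H).
Proof. by move=> x y; rewrite /sg_adj setUC. Qed.

Lemma adj_in (H : subgraph T) x y : is_subgraph G H -> sg_adj H x y -> x \in H.1 /\ y \in H.1.
Proof.
move=> HH /HH [a [b [E ha hb _]]].
have hx : x \in [set x; y] by rewrite !inE eqxx.
have hy : y \in [set x; y] by rewrite !inE eqxx orbT.
rewrite E in hx hy.
by split; [case/set2P: hx => ->|case/set2P: hy => ->].
Qed.

Lemma path_in (H : subgraph T) u p : is_subgraph G H -> path (sg_adj H) u p -> {subset p <= H.1}.
Proof.
move=> HH; elim: p u => // v p IH u /= /andP[a pp] t; rewrite inE => /orP[/eqP->|].
  by case: (adj_in HH a).
exact: IH pp t.
Qed.

Lemma is_path_in (H : subgraph T) u w p : is_subgraph G H -> is_path H u w p -> {subset u::p <= H.1}.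
Proof.
move=> HH [hu pp _ _] t; rewrite inE => /orP[/eqP->//|]; exact: path_in pp t.
Qed.

Lemma rev_is_path (H : subgraph T) u w p : is_subgraph G H -> is_path H u w p ->
  exists q, is_path H w u q /\ (w :: q =i u :: p).
Proof.
move=> HH hp; have hin := is_path_in HH hp; case: hp => hu pp lst up.
have E : w :: rev (belast u p) = rev (u :: p) by rewrite [u :: p]lastI rev_rcons lst.
exists (rev (belast u p)); split; last by move=> t; rewrite E mem_rev.
split.
- by apply: hin; rewrite -lst mem_last.
- by rewrite -lst; apply: rev_path_sym => //; exact: sg_adj_sym.
- by rewrite -(last_cons w w) E rev_cons last_rcons.
- by rewrite E rev_uniq.
Qed.

Definition sep (H : subgraph T) (x u w : T) := exists p, is_path H u w p /\ x \in internal u w p.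

Lemma in_internal (x u w : T) p : (x \in internal u w p) = [&& x \in u :: p, x != u & x != w].
Proof. by rewrite inE andbA. Qed.

Lemma sep_sym (H : subgraph T) x u w : is_subgraph G H -> sep H x u w -> sep H x w u.
Proof.
move=> HH [p [hp hx]]; have [q [hq E]] := rev_is_path HH hp.
exists q; split => //; move: hx; rewrite !in_internal E => /and3P[-> -> ->].
by [].
Qed.

Lemma sep_all (H : subgraph T) x u w p : is_tree G H -> sep H x u w -> is_path H u w p ->
  x \in internal u w p.
Proof.
move=> [HH _ _ acy] [q [[_ pq lq uq] hx]] [_ pp lp up].
have -> : p = q.
  apply: (@path_unique T _ (sg_adj_sym H) acy u) => //.
  by rewrite lp lq.
exact: hx.
Qed.

Lemma sep_split (H : subgraph T) x a b c : is_tree G H -> sep H x a b -> c \in H.1 -> c != x ->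
  sep H x c a \/ sep H x c b.
Proof.
move=> tr sab hc cx; have [HH _ conn acy] := tr.
case: (pselect (sep H x c a)) => [|nca]; first by left.
case: (pselect (sep H x c b)) => [|ncb]; first by right.
exfalso.
have [q [hq _]] := sab; have [ha _ _ _] := hq.
have hb : b \in H.1 by apply: (is_path_in HH hq); case: hq => _ _ <- _; exact: mem_last.
have xab : x != a /\ x != b by case: sab => r [_]; rewrite in_internal => /and3P[].
have [pa hpa] := conn c a hc ha.
have [pb hpb] := conn c b hc hb.
have xpa : x \notin c :: pa.
  apply/negP => xin; apply: nca; exists pa; split => //.
  by rewrite in_internal xin eq_sym cx; case: xab.
have xpb : x \notin c :: pb.
  apply/negP => xin; apply: ncb; exists pb; split => //.
  by rewrite in_internal xin eq_sym cx; case: xab.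
have [qa [hqa Eqa]] := rev_is_path HH hpa.
have xqa : x \notin a :: qa by rewrite Eqa.
case: hqa => _ pqa lqa _; case: hpb => _ ppb lpb _.
have pw : path (sg_adj H) a (qa ++ pb) by rewrite cat_path pqa lqa.
have lw : last a (qa ++ pb) = b by rewrite last_cat lqa lpb.
move: lw; case: (shortenP pw) => p' pp' up' sub' lp'.
have := sep_all tr sab (p := p'); rewrite in_internal => /(_ (And4 ha pp' lp' up')).
case/and3P; rewrite inE => /orP[/eqP xa|xp'] _ _.
  by case: xab; rewrite xa eqxx.
move: (sub' _ xp'); rewrite mem_cat => /orP[xq|xp].
  by move: xqa; rewrite inE xq orbT.
by move: xpb; rewrite inE xp orbT.
Qed.
End Graph.

Lemma walk_rev (T : finType) (e : rel T) (esym : symmetric e) x p : path e x p ->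
  exists q, [/\ path e (last x p) q, last (last x p) q = x & {subset q <= x :: p}].
Proof.
move=> pp; have E : last x p :: rev (belast x p) = rev (x :: p)
  by rewrite [x :: p]lastI rev_rcons.
exists (rev (belast x p)); split.
- exact: rev_path_sym.
- by rewrite -(last_cons x) E rev_cons last_rcons.
- by move=> t tq; rewrite -mem_rev -E inE tq orbT.
Qed.

Lemma prefix_path (T : finType) (e : rel T) a p u : u \in a :: p -> path e a p ->
  exists p1, [/\ path e a p1, last a p1 = u & {subset a :: p1 <= a :: p}].
Proof.
move=> hu; case/splitPl: hu => p1 p2 lst; rewrite cat_path => /andP[pp _].
exists p1; split => // t; rewrite !inE mem_cat => /orP[->//|->]; by rewrite !orbT.
Qed.

Section Prune.
Variables (T : finType) (G : rel T) (S : {set T}).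

Definition pV (H : subgraph T) : {set T} :=
  [set v | `[< exists a b p, [/\ a \in S, b \in S, is_path H a b p & v \in a :: p] >]].
Definition prune (H : subgraph T) : subgraph T := (pV H, [set E in H.2 | E \subset pV H]).

Lemma pVP (H : subgraph T) v : reflect (exists a b p, [/\ a \in S, b \in S, is_path H a b p & v \in a :: p])
  (v \in pV H).
Proof. rewrite inE; exact: asboolP. Qed.

Lemma adj_prune (H : subgraph T) x y : sg_adj (prune H) x y = [&& sg_adj H x y, x \in pV H & y \in pV H].
Proof. by rewrite /sg_adj /= inE subUset !sub1set. Qed.

Lemma S_pV (H : subgraph T) : S \subset H.1 -> S \subset pV H.
Proof.
move=> SH; apply/subsetP => a aS; apply/pVP; exists a, a, [::]; split => //.
- by split => //; exact: (subsetP SH).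
- by rewrite inE.
Qed.

Lemma pV_sub (H : subgraph T) : is_subgraph G H -> pV H \subset H.1.
Proof.
move=> HH; apply/subsetP => v /pVP [a [b [p [_ _ hp hv]]]]; exact: (is_path_in HH hp).
Qed.

Lemma path_pV (H : subgraph T) a b p : a \in S -> b \in S -> is_path H a b p -> {subset a :: p <= pV H}.
Proof. by move=> aS bS hp t ht; apply/pVP; exists a, b, p. Qed.

Lemma path_to_prune (H : subgraph T) a p : {subset a :: p <= pV H} -> path (sg_adj H) a p ->
  path (sg_adj (prune H)) a p.
Proof.
elim: p a => //= v p IH a sub /andP[e pp].
rewrite adj_prune e !sub ?inE ?eqxx ?orbT //=.
apply: IH pp => t; rewrite inE => /orP[/eqP->|tp]; apply: sub; by rewrite !inE ?eqxx ?tp ?orbT.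
Qed.

Lemma prune_tree (H : subgraph T) : is_tree G H -> S \subset H.1 -> S != set0 -> steiner_tree G S (prune H).
Proof.
move=> [HH ne conn acy] SH Sne.
have SpV := S_pV SH.
have HH' : is_subgraph G (prune H).
  move=> E; rewrite inE => /andP[EH Esub]; have [x [y [Ex hx hy Gxy]]] := HH E EH.
  exists x, y; split => //; apply: (subsetP Esub); by rewrite Ex !inE eqxx ?orbT.
split; last first.
- move=> x [xin deg1]; case: (boolP (x \in S)) => // xS; exfalso.
  case/pVP: xin => a [b [p [aS bS [ha pp lp up] xp]]].
  have xa : x != a by apply: contraNneq xS => ->.
  have xb : x != b by apply: contraNneq xS => ->.
  have sub := path_pV aS bS (And4 ha pp lp up).
  move: xp; rewrite inE (negbTE xa) /= => xp.
  move: sub pp lp up; case/splitPr: xp => p1 p2.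
  case: p2 => [|y p2] sub pp lp up.
    by move: lp; rewrite last_cat /= => xb'; rewrite xb' eqxx in xb.
  move: pp; rewrite cat_path => /andP[_ /= /and3P[ewx exy _]].
  set w := last a p1 in ewx.
  have wy : w != y.
    move: up; rewrite -cat_cons cat_uniq => /and3P[_ hn _].
    apply/negP => /eqP wy; move/hasP: hn; apply; exists y; first by rewrite !inE eqxx orbT.
    by rewrite -wy /w /= mem_last.
  have win : w \in pV H by apply: sub; rewrite -cat_cons mem_cat /w mem_last.
  have xin : x \in pV H by apply: sub; rewrite !inE mem_cat !inE eqxx !orbT.
  have yin : y \in pV H by apply: sub; rewrite !inE mem_cat !inE eqxx !orbT.
  have : [set w; y] \subset [set z | sg_adj (prune H) x z].
    apply/subsetP => t; rewrite !inE => /orP[/eqP->|/eqP->]; rewrite adj_prune.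
      by rewrite sg_adj_sym ewx win xin.
    by rewrite exy xin yin.
  move/subset_leq_card; rewrite cards2 wy.
  by move: deg1; rewrite /sg_deg => ->.
- exact: SpV.
split => //.
- case/set0Pn: Sne => a aS; apply/set0Pn; exists a; exact: (subsetP SpV).
- move=> u v /pVP [a [b [p [aS bS hp hu]]]] /pVP [c [d [r [cS dS hr hv]]]].
  have subp := path_pV aS bS hp; have subr := path_pV cS dS hr.
  have [_ pp _ _] := hp; have [_ pr _ _] := hr.
  have [wu [pwu lwu swu]] := prefix_path hu pp.
  have [wv [pwv lwv swv]] := prefix_path hv pr.
  have ha : a \in H.1 by apply: (subsetP SH).
  have hc : c \in H.1 by apply: (subsetP SH).
  have [wc hwc] := conn a c ha hc.
  have subc := path_pV aS cS hwc.
  have [_ pwc lwc _] := hwc.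
  have pwu' : path (sg_adj (prune H)) a wu.
    by apply: path_to_prune => // t /swu; apply: subp.
  have pwv' : path (sg_adj (prune H)) c wv.
    by apply: path_to_prune => // t /swv; apply: subr.
  have pwc' : path (sg_adj (prune H)) a wc by apply: path_to_prune.
  have [q [pq lq _]] := walk_rev (@sg_adj_sym _ (prune H)) pwu'.
  rewrite lwu in pq lq.
  have pw : path (sg_adj (prune H)) u (q ++ wc ++ wv) by rewrite !cat_path pq lq pwc' lwc pwv'.
  have lw : last u (q ++ wc ++ wv) = v by rewrite !last_cat lq lwc lwv.
  move: lw; case: (shortenP pw) => p' pp' up' _ lp'.
  exists p'; split => //=.
  exact: subp.
- move=> cc hc uc cyc; apply: (acy cc hc uc); apply: sub_cycle cyc => x y.
  by rewrite adj_prune => /andP[].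
Qed.
End Prune.

Section Fam.
Variables (T : finType) (G : rel T).

Lemma is_path_prune (S : {set T}) (H : subgraph T) u w p : is_subgraph G H ->
  is_path (prune S H) u w p -> is_path H u w p.
Proof.
move=> HH [hu pp lp up]; split => //.
- exact: (subsetP (pV_sub S HH)).
- by apply: sub_path pp => x y; rewrite adj_prune => /andP[].
Qed.

Lemma prune_family (S S' : {set T}) m (F : 'I_m -> subgraph T) : S \subset S' -> S != set0 ->
  compl_indep G S' F -> compl_indep G S (fun i => prune S (F i)).
Proof.
move=> SS' Sne [trees rel].
have tr i : is_tree G (F i) by case: (trees i).
have SH i : S \subset (F i).1 by case: (trees i) => _ h _; exact: subset_trans SS' h.
split; first by move=> i; apply: prune_tree.
move=> i j ij; have [E V P] := rel i j ij.
have [HHi _ _ _] := tr i; have [HHj _ _ _] := tr j.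
split.
- apply/eqP; rewrite -subset0 -E; apply: setISS; apply/subsetP => t; rewrite inE => /andP[] //.
- apply/setP => x; rewrite inE; apply/andP/idP => [[xi xj]|xS]; last first.
    by split; apply: (subsetP (S_pV (SH _))).
  case: (boolP (x \in S)) => // xS; exfalso.
  have sepS (H : subgraph T) a b p : a \in S -> b \in S -> is_path H a b p -> x \in a :: p ->
      sep H x a b.
    move=> aS bS hp xp; exists p; split => //; rewrite in_internal xp /=.
    by apply/andP; split; [apply: contraNneq xS => ->|apply: contraNneq xS => ->].
  case/pVP: xi => a [b [p [aS bS hp xp]]]; case/pVP: xj => c [d [r [cS dS hr xr]]].
  have sab := sepS _ _ _ _ aS bS hp xp; have scd := sepS _ _ _ _ cS dS hr xr.
  have key u w : u \in S -> w \in S -> sep (F i) x u w -> sep (F j) x u w -> False.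
    move=> uS wS [pu [hpu xpu]] [qu [hqu xqu]].
    have := P u w pu qu (subsetP SS' _ uS) (subsetP SS' _ wS) hpu hqu.
    by move/disjointFr => /(_ _ xpu); rewrite xqu.
  have nx u : u \in S -> u != x by move=> uS; apply: contraNneq xS => <-.
  have inH k u : u \in S -> u \in (F k).1 by move=> uS; exact: (subsetP (SH k)).
  have ncd : ~ sep (F i) x c d by move=> h; exact: (key c d).
  have gen e : e \in S -> sep (F i) x c e -> False.
    move=> eS sce.
    have [h|sda] := sep_split (tr i) sce (inH i d dS) (nx d dS).
      by apply: ncd; apply: sep_sym HHi h.
    have [h|h] := sep_split (tr j) scd (inH j e eS) (nx e eS).
      by apply: (key c e) => //; apply: sep_sym HHj h.
    by apply: (key d e) => //; apply: sep_sym HHj h.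
  have [h|h] := sep_split (tr i) sab (inH i c cS) (nx c cS); [exact: (gen a)|exact: (gen b)].
- move=> x1 x2 p q x1S x2S hp hq; apply: P.
  + exact: (subsetP SS').
  + exact: (subsetP SS').
  + exact: is_path_prune HHi hp.
  + exact: is_path_prune HHj hq.
Qed.

Lemma kappaS_mono (S S' : {set T}) : S \subset S' -> S != set0 -> kappaS G S' <= kappaS G S.
Proof.
move=> SS' Sne; apply/bigmax_leqP => m /asboolP [F hF]; apply: leq_bigmax_cond.
apply/asboolP; exists (fun i => prune S (F i)); exact: prune_family hF.
Qed.

Lemma bigmin_le (I : finType) (P : pred I) (F : I -> nat) N i : P i ->
  \big[minn/N]_(j | P j) F j <= F i.
Proof.
move=> Pi; have : i \in index_enum I := mem_index_enum i.
elim: (index_enum I) => [//|j r IH]; rewrite big_cons inE => /orP[/eqP<-|ir].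
  by rewrite Pi geq_minl.
case: (P j); last exact: IH.
exact: leq_trans (geq_minr _ _) (IH ir).
Qed.

Lemma superset (S : {set T}) n : #|S| <= n -> n <= #|T| -> exists S' : {set T}, S \subset S' /\ #|S'| = n.
Proof.
elim: n => [|n IH] hS hn.
  by exists S; split => //; apply/eqP; rewrite -leqn0.
case: (ltngtP #|S| n.+1) => [lt|gt|eq]; last by exists S.
  have [S1 [sub c1]] := IH lt (ltnW hn).
  case: (pickP (fun x => x \notin S1)) => [x xS1|all].
    exists (x |: S1); split; first by apply: subset_trans sub (subsetU1 _ _).
    by rewrite cardsU1 xS1 c1.
  have : [set: T] \subset S1 by apply/subsetP => y _; move: (all y) => /negbFE.
  by move/subset_leq_card; rewrite cardsT c1 => h; move: (leq_trans hn h); rewrite ltnn.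
by move: (leq_ltn_trans hS gt); rewrite ltnn.
Qed.
End Fam.

Theorem corollary2p3 (T : finType) (G : rel T)
  (Gsym : symmetric G) (Girr : irreflexive G)
  (Gconn : forall x y : T, connect G x y)
  (k l : nat) (hk : 2 <= k) (hkl : k <= l) (hl : l <= #|T|) :
  kappa_star G l <= kappa_star G k.
Proof.
have hlN : kappa_star G l <= #|T| * #|T|.
  rewrite /kappa_star; apply: (big_ind (fun y => y <= #|T| * #|T|)) => //.
    by move=> x y hx _; exact: leq_trans (geq_minl _ _) hx.
  move=> S _; apply/bigmax_leqP => m _; rewrite -ltnS; exact: ltn_ord.
rewrite {2}/kappa_star; apply: (big_ind (fun y => kappa_star G l <= y)) => //.
  by move=> x y hx hy; rewrite leq_min hx hy.
move=> S /eqP hS.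
have hSl : #|S| <= l by rewrite hS.
have [S' [sub cS']] := @superset T S l hSl hl.
apply: leq_trans (kappaS_mono G sub _).
  by apply: bigmin_le; rewrite cS'.
by rewrite -card_gt0 hS; exact: leq_trans _ hk.
Qed.
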